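(* The functions $F(n)=\sum_{j=1}^n\frac{(-1)^{j-1}}{j}$, $L(n)=\sum_{j=1}^n\frac{(-1)^{j-1}}{2j-1}$ and $S(n)=\sum_{j=1}^n\frac{1}{j!}$ of the positive integer variable $n$ are transcendental functions in $n$ over $\overline{\mathbb{Q}}$.
   Context: $\overline{\mathbb{Q}}\subseteq\mathbb{C}$ denotes the field of algebraic numbers. A function $f(n)$ of the positive integer variable $n$ is an algebraic function over a subfield $K\subseteq\mathbb{C}$ if there exist polynomials $q_0,\dots,q_k\in K[n]$ with $q_k\neq 0$ such that $q_k(n)f(n)^k+\cdots+q_1(n)f(n)+q_0(n)=0$ for all positive integers $n$; otherwise $f$ is a transcendental function over $K$. *)

(* Defs.v *)
(* Qbar = algC (the field of algebraic numbers). *)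
From HB Require Import structures.
From mathcomp Require Import all_boot all_order all_algebra all_field.
Set Implicit Arguments. Unset Strict Implicit. Unset Printing Implicit Defensive.
Import Order.TTheory GRing.Theory Num.Theory.
Local Open Scope ring_scope.

Definition algebraic_fun_Qbar (f : nat -> algC) : Prop :=
  exists (k : nat) (q : nat -> {poly algC}),
    q k != 0 /\
    forall n : nat, (0 < n)%N ->
      \sum_(i < k.+1) (q i).[n%:R] * f n ^+ i = 0.

Definition transcendental_fun_Qbar (f : nat -> algC) : Prop :=
  ~ algebraic_fun_Qbar f.

Definition Ffun (n : nat) : algC :=
  \sum_(1 <= j < n.+1) (-1) ^+ (j.-1) / j%:R.

Definition Lfun (n : nat) : algC :=
  \sum_(1 <= j < n.+1) (-1) ^+ (j.-1) / (j.*2.-1)%:R.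

Definition Sfun (n : nat) : algC :=
  \sum_(1 <= j < n.+1) ((j`!)%:R)^-1.

(* Main.v *)
Require Import Defs.
From HB Require Import structures.
From mathcomp Require Import all_boot all_order all_algebra all_field.
From mathcomp Require Import ring zify.
Set Implicit Arguments. Unset Strict Implicit. Unset Printing Implicit Defensive.
Import Order.TTheory GRing.Theory Num.Theory.
Local Open Scope ring_scope.


Definition Vm1 (p : nat) (x : rat) := exists (A : int) (B : nat),
  [/\ ~~ (p %| `|A|)%N, ~~ (p %| B)%N & x = A%:~R / (p * B)%:R].
Definition V0 (p : nat) (x : rat) := exists (A : int) (B : nat),
  ~~ (p %| B)%N /\ x = A%:~R / B%:R.

Lemma nz_of_ndvd p B : ~~ (p %| B)%N -> (B%:R : rat) != 0.
Proof. by move=> h; rewrite pnatr_eq0; apply: contraNneq h => ->; rewrite dvdn0. Qed.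

Lemma V0_0 p : prime p -> V0 p 0.
Proof.
move=> pr; exists 0, 1%N; split; last by rewrite mul0r.
by rewrite dvdn1; case: eqP pr => // ->.
Qed.

Lemma V0_add p x y : prime p -> V0 p x -> V0 p y -> V0 p (x + y).
Proof.
move=> pr [A [B [nB ->]]] [C [E [nE ->]]].
exists (A * E%:Z + C * B%:Z), (B * E)%N; split.
  by rewrite Euclid_dvdM // negb_or nB nE.
have hB := nz_of_ndvd nB; have hE := nz_of_ndvd nE.
rewrite rmorphD !rmorphM /= -!pmulrn; field.
by apply/andP.
Qed.

Lemma Vm1_add p x y : prime p -> Vm1 p x -> V0 p y -> Vm1 p (x + y).
Proof.
move=> pr [A [B [nA nB ->]]] [C [E [nE ->]]].
exists (A * E%:Z + p%:Z * (B%:Z * C)), (B * E)%N; split.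
- have : ~~ (p%:Z %| A * E%:Z)%Z by rewrite dvdzE abszM /= Euclid_dvdM // negb_or nA nE.
  have -> : forall X : int, (p %| `|X|)%N = (p%:Z %| X)%Z by move=> X; rewrite dvdzE.
  by rewrite rpredDr // dvdz_mulr // dvdzz.
- by rewrite Euclid_dvdM // negb_or nB nE.
have hB := nz_of_ndvd nB; have hE := nz_of_ndvd nE.
have hp : (p%:R : rat) != 0 by rewrite pnatr_eq0 -lt0n prime_gt0.
rewrite rmorphD !rmorphM /= -!pmulrn ?natrM; field.
by rewrite ?hB ?hE ?hp.
Qed.

Lemma V0_sum p (m n : nat) (F : nat -> rat) : prime p ->
  (forall j, (m <= j < n)%N -> V0 p (F j)) -> V0 p (\sum_(m <= j < n) F j).
Proof.
move=> pr h; rewrite big_seq; apply: (big_ind (V0 p)).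
- exact: V0_0.
- by move=> x y; apply: V0_add.
by move=> j; rewrite mem_index_iota => /h.
Qed.

Lemma Vm1_sum p (m n j0 : nat) (F : nat -> rat) : prime p ->
  (m <= j0 < n)%N -> Vm1 p (F j0) ->
  (forall j, (m <= j < n)%N -> j != j0 -> V0 p (F j)) -> Vm1 p (\sum_(m <= j < n) F j).
Proof.
move=> pr hj0 hF h; rewrite (bigD1_seq j0) ?mem_index_iota ?iota_uniq //=.
apply: Vm1_add => //; rewrite big_seq_cond; apply: (big_ind (V0 p)).
- exact: V0_0.
- by move=> x y; apply: V0_add.
by move=> j /andP[]; rewrite mem_index_iota => /h.
Qed.

Lemma V0_sgn p e B : ~~ (p %| B)%N -> V0 p ((-1) ^+ e / B%:R).
Proof.
by move=> nB; exists ((-1) ^+ e), B; split => //; rewrite rmorphXn rmorphN1.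
Qed.

Lemma Vm1_sgn p e : prime p -> Vm1 p ((-1) ^+ e / p%:R).
Proof.
move=> pr; exists ((-1) ^+ e), 1%N; split.
- rewrite abszX /= exp1n dvdn1; by case: eqP pr => // ->.
- by rewrite dvdn1; case: eqP pr => // ->.
by rewrite rmorphXn rmorphN1 muln1.
Qed.

Definition Fq (n : nat) : rat := \sum_(1 <= j < n.+1) (-1) ^+ (j.-1) / j%:R.
Definition Lq (n : nat) : rat := \sum_(1 <= j < n.+1) (-1) ^+ (j.-1) / (j.*2.-1)%:R.
Definition Sq (n : nat) : rat := \sum_(1 <= j < n.+1) ((j`!)%:R)^-1.

Lemma Fq_Vm1 p t : prime p -> (t < p)%N -> Vm1 p (Fq (p + t)).
Proof.
move=> pr tp; have p0 := prime_gt0 pr.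
apply: (@Vm1_sum _ _ _ p) => //; first by apply/andP; split => //; lia.
  exact: Vm1_sgn.
move=> j /andP[j1 j2] jp; apply: V0_sgn; apply/negP => /dvdnP[c hc].
move/eqP: jp; case: c hc => [|[|c]] hc; nia.
Qed.

Lemma Lq_Vm1 p t : prime p -> (2 < p)%N -> (t.*2 < p)%N -> Vm1 p (Lq (p + t)).
Proof.
move=> pr p2 tp; have p0 := prime_gt0 pr.
have op : odd p by case: (even_prime pr) => // h; rewrite h in p2.
have hp : p = ((p./2) * 2).+1 by rewrite muln2 -{1}(odd_double_half p) op.
apply: (@Vm1_sum _ _ _ (p./2.+1)) => //.
- apply/andP; split => //; lia.
- have -> : (p./2.+1).*2.-1 = p by rewrite -muln2; lia.
  exact: Vm1_sgn.
move=> j /andP[j1 j2] jp; apply: V0_sgn; apply/negP => /dvdnP[c hc].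
move/eqP: jp; rewrite -!muln2 in hc tp *.
case: c hc => [|[|[|c]]] hc; nia.
Qed.

Fixpoint Ef (t : nat) : nat := if t is t'.+1 then (Ef t' * t + 1)%N else 1%N.

Lemma Ef_gt0 t : (0 < Ef t)%N.
Proof. by case: t => //= t; rewrite addn1. Qed.

Lemma nfact p j : prime p -> (j < p)%N -> ~~ (p %| j`!)%N.
Proof.
move=> pr; elim: j => [|j IH] hj; first by rewrite dvdn1; case: eqP pr => // ->.
rewrite factS Euclid_dvdM // negb_or IH ?andbT; last by lia.
by apply/negP => /(dvdn_leq (ltn0Sn j)); rewrite leqNgt hj.
Qed.

Lemma tailS p t : prime p -> (t < p)%N -> exists W C : nat,
  [/\ W = Ef t %[mod p], ~~ (p %| C)%N, (p + t)`! = (p * C)%N &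
      \sum_(p <= j < (p + t).+1) ((j`!)%:R : rat)^-1 = W%:R / (p * C)%:R].
Proof.
move=> pr; have p0 := prime_gt0 pr.
elim: t => [|t IH] ht.
  exists 1%N, (p.-1)`!; split => //.
  - by apply: nfact; lia.
  - by rewrite addn0 -{1}(prednK p0) factS prednK.
  by rewrite addn0 big_nat1 mul1r -{1}(prednK p0) factS prednK.
have [W [C [hW hC hf hs]]] := IH (ltnW ht).
exists (W * (p + t.+1) + 1)%N, (C * (p + t.+1))%N; split.
- rewrite /= -modnDml mulnDr modnMDl -modnMml hW modnMml.
  by rewrite modnDml.
- rewrite Euclid_dvdM // negb_or hC /= dvdn_addr ?dvdnn //.
  by apply/negP => /(dvdn_leq (ltn0Sn t)); rewrite leqNgt ht.
- by rewrite addnS factS hf; ring.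
rewrite addnS big_nat_recr /=; last by lia.
rewrite hs factS hf.
have hC0 := nz_of_ndvd hC.
have hp : (p%:R : rat) != 0 by rewrite pnatr_eq0 -lt0n.
rewrite !natrM !natrD /= ?natrM; field.
have h : ((1 + (p + t))%N%:R : rat) != 0 by rewrite pnatr_eq0.
by move: h; rewrite !natrD => ->; rewrite hC0 hp.
Qed.

Lemma Sq_Vm1 p t : prime p -> (t < p)%N -> (Ef t < p)%N -> Vm1 p (Sq (p + t)).
Proof.
move=> pr tp ep; have p0 := prime_gt0 pr.
rewrite /Sq (@big_cat_nat _ _ _ p) //=; last by lia.
rewrite addrC; apply: Vm1_add => //; last first.
  apply: V0_sum => // j /andP[j1 j2].
  exists 1, (j`!); split; first by apply: nfact; lia.
  by rewrite mul1r.
have [W [C [hW hC hf hs]]] := tailS pr tp.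
rewrite hs; exists W, C; split => //.
by rewrite /dvdn /= hW modn_small // -lt0n Ef_gt0.
Qed.




Lemma core (k D : nat) (a : nat -> nat -> int) (r : nat -> rat) :
  (exists2 l, (l < D)%N & a k l != 0) ->
  (forall n, (0 < n)%N ->
     \sum_(i < k.+1) ((\sum_(l < D) a i l * (n%:Z) ^+ l)%:~R : rat) * r n ^+ i = 0) ->
  (forall t, (0 < t)%N -> exists N, forall p, prime p -> (N < p)%N -> Vm1 p (r (p + t)%N)) ->
  False.
Proof.
move=> [l0 l0D al0] hrel hV.
pose al i (n : nat) := \sum_(l < D) a i l * (n%:Z) ^+ l.
have step : forall t, (0 < t)%N -> al k t = 0.
  move=> t t0; have [N HN] := hV t t0.
  have [p Hp pr] := prime_above (maxn N `|al k t|).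
  rewrite gtn_max in Hp; case/andP: Hp => HpN Hpa.
  have [A [B [nA nB Hr]]] := HN p pr HpN.
  have p0 : (0 < p)%N by apply: prime_gt0.
  have B0 : (0 < B)%N by rewrite lt0n; apply: contraNneq nB => ->; rewrite dvdn0.
  set n := (p + t)%N.
  have := hrel n (ltn_addl _ t0); rewrite Hr => Hrel.
  have Z : \sum_(i < k.+1) al i n * A ^+ i * ((p * B)%N%:Z) ^+ (k - i) = 0.
    apply: (@intr_inj rat); rewrite rmorph_sum rmorph0 /=.
    have pB0 : ((p * B)%N%:R : rat) != 0 by rewrite pnatr_eq0 -lt0n muln_gt0 p0.
    apply: (@etrans _ _ ((((p * B)%N%:R : rat) ^+ k) * 0)); last by rewrite mulr0.
    rewrite -{2}Hrel mulr_sumr.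
    apply: eq_bigr => i _.
    have ik : (i <= k)%N by rewrite -ltnS.
    have -> : ((p * B)%N%:R : rat) ^+ k = (p * B)%N%:R ^+ i * (p * B)%N%:R ^+ (k - i).
      by rewrite -exprD subnKC.
    rewrite !rmorphM !rmorphXn /= -pmulrn [al i n]/al.
    rewrite !natrM expr_div_n.
    rewrite natrM in pB0.
    set c := (p%:R * B%:R : rat) in pB0 *.
    have ci : c ^+ i != 0 by rewrite expf_neq0.
    move: ci; set P1 := c ^+ i; set P2 := c ^+ (k - i); set U := (A%:~R : rat) ^+ i.
    by move=> ci; field.
  rewrite big_ord_recr /= subnn expr0 mulr1 in Z.
  have dk : (p %| al k n * A ^+ k)%Z.
    have -> : al k n * A ^+ k = - \sum_(i < k) al (widen_ord (leqnSn k) i) n * A ^+ i *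
                 ((p * B)%N%:Z) ^+ (k - widen_ord (leqnSn k) i).
      by apply/eqP; rewrite -addr_eq0 addrC Z.
    rewrite rpredN; apply: rpred_sum => i _.
    rewrite /= -(subnSK (ltn_ord i)) exprS mulrA mulrC mulrA.
    by apply: dvdz_mull; rewrite PoszM dvdz_mulr ?dvdzz.
  have dn : (p %| al k n)%Z.
    move: dk; rewrite !dvdzE abszM abszX /= Euclid_dvdM // Euclid_dvdX //.
    by rewrite (negbTE nA) andFb orbF.
  have dt : (p %| al k t)%Z.
    have : (p %| al k n - al k t)%Z.
      rewrite /al -sumrB; apply: rpred_sum => l _.
      rewrite -mulrBr dvdz_mull // subrXX dvdz_mulr //.
      by rewrite /n PoszD addrK dvdzz.
    by rewrite rpredBl.
  move: dt; rewrite dvdzE /=; case E : `|al k t|%N => [|m].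
    by move/eqP: E; rewrite absz_eq0 => /eqP.
  by move/(dvdn_leq (ltn0Sn m)); rewrite -E leqNgt Hpa.
pose P : {poly rat} := \poly_(l < D) (a k l)%:~R.
have Proot : forall t, (0 < t)%N -> P.[t%:R] = 0.
  move=> t t0; rewrite horner_poly.
  apply: (@etrans _ _ ((al k t)%:~R)); last by rewrite step.
  rewrite rmorph_sum /=.
  by apply: eq_bigr => l _; rewrite rmorphM rmorphXn /= -pmulrn.
have P0 : P = 0.
  apply/eqP; apply: contraT => nzP.
  have := max_poly_roots nzP (rs := [seq (t.+1)%:R | t <- iota 0 D]).
  rewrite size_map size_iota => H.
  have : (D < size P)%N.
    apply: H.
      by apply/allP => _ /mapP[t _ ->]; rewrite /root Proot.
    rewrite map_inj_uniq ?iota_uniq // => x y /eqP.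
    by rewrite eqr_nat => /eqP [].
  by rewrite ltnNge size_poly.
move: (congr1 (fun q : {poly rat} => q`_l0) P0).
by rewrite coef_poly l0D coef0 => /eqP; rewrite intr_eq0 (negbTE al0).
Qed.


Lemma reduce (f : nat -> algC) (r : nat -> rat) :
  (forall n, f n = ratr (r n)) ->
  (exists (k : nat) (q : nat -> {poly algC}),
    q k != 0 /\
    forall n : nat, (0 < n)%N ->
      \sum_(i < k.+1) (q i).[n%:R] * f n ^+ i = 0) ->
  exists k D (a : nat -> nat -> int), (exists2 l, (l < D)%N & a k l != 0) /\
  forall n, (0 < n)%N ->
     \sum_(i < k.+1) ((\sum_(l < D) a i l * (n%:Z) ^+ l)%:~R : rat) * r n ^+ i = 0.
Proof.
move=> hf [k [q [qk0 hq]]].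
pose D := \max_(i < k.+1) size (q i).
have hD : forall i : 'I_k.+1, (size (q i) <= D)%N by move=> i; apply: leq_bigmax.
pose s := [seq (q i)`_l | i <- iota 0 k.+1, l <- iota 0 D].
have [Qs [QsC [s1 hs1 _]]] := num_field_exists s.
pose c (i l : nat) := nth 0 s1 (index (q i)`_l s).
have cK : forall i l, (i < k.+1)%N -> (l < D)%N -> QsC (c i l) = (q i)`_l.
  move=> i l hi hl.
  have hin : (q i)`_l \in s by apply: allpairs_f; rewrite mem_iota.
  have hsz : size s1 = size s by rewrite -hs1 size_map.
  rewrite /c -(nth_map 0 0) ?hsz ?index_mem // hs1 nth_index //.
have relQ : forall n, (0 < n)%N ->
    \sum_(i < k.+1) \sum_(l < D) ((n%:R : rat) ^+ l * r n ^+ i) *: c i l = 0.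
  move=> n n0; apply: (fmorph_inj QsC); rewrite rmorph0 -(hq n n0) rmorph_sum.
  apply: eq_bigr => i _; rewrite (horner_coef_wide _ (hD i)) mulr_suml rmorph_sum.
  apply: eq_bigr => l _; rewrite rmorphZ_num cK // hf rmorphM !rmorphXn rmorph_nat.
  by rewrite mulrC mulrA.
pose l0 := (size (q k)).-1.
have l0D : (l0 < D)%N.
  have h : (size (q k) <= D)%N := hD ord_max.
  have h' : (0 < size (q k))%N by rewrite size_poly_gt0.
  rewrite /l0; lia.
have c0 : c k l0 != 0.
  apply: contra qk0 => /eqP h; rewrite -lead_coef_eq0 /lead_coef -/l0 -cK //.
  by rewrite h rmorph0.
have [j hj] : exists j, coord (vbasis (fullv : {vspace Qs})) j (c k l0) != 0.
  apply/existsP; apply: contraR c0; rewrite negb_exists => /forallP h0.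
  rewrite (coord_vbasis (memvf (c k l0))); apply/eqP; apply: big1 => i _.
  by have := h0 i; rewrite negbK => /eqP ->; rewrite scale0r.
pose b i l := coord (vbasis (fullv : {vspace Qs})) j (c i l).
have relR : forall n, (0 < n)%N ->
    \sum_(i < k.+1) \sum_(l < D) (n%:R : rat) ^+ l * r n ^+ i * b i l = 0.
  move=> n n0; have h := congr1 (coord (vbasis (fullv : {vspace Qs})) j) (relQ n n0).
  rewrite linear0 linear_sum in h; apply: (etrans _ h); apply: eq_bigr => i _.
  by rewrite linear_sum; apply: eq_bigr => l _; rewrite linearZ.
pose m : int := \prod_(i < k.+1) \prod_(l < D) denq (b i l).
pose a i l := numq ((m%:~R : rat) * b i l).
have aK : forall (i : 'I_k.+1) (l : 'I_D), ((a i l)%:~R : rat) = m%:~R * b i l.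
  move=> i l; rewrite /a /m (bigD1 i) //= (bigD1 l) //=.
  set R1 := \prod_(_ < D | _) _; set R2 := \prod_(_ < k.+1 | _) _.
  have e : ((denq (b i l) * R1 * R2)%:~R : rat) * b i l = (numq (b i l) * R1 * R2)%:~R.
    by rewrite !rmorphM /= numqE; ring.
  by rewrite e numq_int.
have m0 : m != 0.
  by rewrite /m; apply/prodf_neq0 => i _; apply/prodf_neq0 => l _; apply: denq_neq0.
exists k, D, a; split.
  exists l0 => //.
  have := aK ord_max (Ordinal l0D); rewrite /= => h.
  by rewrite -(intr_eq0 rat) h mulf_neq0 // intr_eq0.
move=> n n0.
apply: (etrans _ (etrans (congr1 (GRing.mul (m%:~R : rat)) (relR n n0)) (mulr0 _))).
rewrite mulr_sumr.
apply: eq_bigr => i _; rewrite rmorph_sum mulr_suml mulr_sumr; apply: eq_bigr => l _.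
by rewrite rmorphM rmorphXn /= aK -pmulrn; ring.
Qed.

Lemma Ffun_q n : Ffun n = ratr (Fq n).
Proof.
rewrite /Ffun /Fq rmorph_sum; apply: eq_bigr => j _.
by rewrite fmorph_div rmorphXn rmorphN1 /= ratr_nat.
Qed.

Lemma Lfun_q n : Lfun n = ratr (Lq n).
Proof.
rewrite /Lfun /Lq rmorph_sum; apply: eq_bigr => j _.
by rewrite fmorph_div rmorphXn rmorphN1 /= ratr_nat.
Qed.

Lemma Sfun_q n : Sfun n = ratr (Sq n).
Proof.
rewrite /Sfun /Sq rmorph_sum; apply: eq_bigr => j _.
by rewrite fmorphV /= ratr_nat.
Qed.

Theorem mainTheorem11 :
  transcendental_fun_Qbar Ffun /\
  transcendental_fun_Qbar Lfun /\
  transcendental_fun_Qbar Sfun.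
Proof.
split; [|split].
- move=> h; have [k [D [a [hl hrel]]]] := reduce Ffun_q h.
  apply: (core hl hrel) => t t0; exists t => p pr tp; exact: Fq_Vm1.
- move=> h; have [k [D [a [hl hrel]]]] := reduce Lfun_q h.
  apply: (core hl hrel) => t t0; exists (maxn 2 t.*2) => p pr.
  by rewrite gtn_max => /andP[h1 h2]; apply: Lq_Vm1.
- move=> h; have [k [D [a [hl hrel]]]] := reduce Sfun_q h.
  apply: (core hl hrel) => t t0; exists (maxn t (Ef t)) => p pr.
  by rewrite gtn_max => /andP[h1 h2]; apply: Sq_Vm1.
Qed.
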